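(* There exists a centrally essential ring containing a maximal right ideal which is not a two-sided ideal.
   Context: All rings are associative, unital and non-zero. $Z(A)$ denotes the center of a ring $A$. A ring $A$ is centrally essential if either $A$ is commutative or for every non-central element $a\in A$ there exist non-zero central elements $x,y\in Z(A)$ with $ax=y$. *)

(* Defs.v *)
From HB Require Import structures.
From mathcomp Require Import all_boot all_order all_algebra.
Set Implicit Arguments. Unset Strict Implicit. Unset Printing Implicit Defensive.
Import GRing.Theory.
Local Open Scope ring_scope.

Definition central (A : nzRingType) (x : A) : Prop := forall y : A, x * y = y * x.

Definition ring_commutative (A : nzRingType) : Prop := forall x y : A, x * y = y * x.

Definition centrally_essential (A : nzRingType) : Prop :=
  ring_commutative A \/
  (forall a : A, ~ central a ->
     exists x y : A, [/\ central x, central y, x != 0, y != 0 & a * x = y]).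

Definition additive_subgroup (A : nzRingType) (I : A -> Prop) : Prop :=
  I 0 /\ (forall x y, I x -> I y -> I (x - y)).

Definition right_ideal (A : nzRingType) (I : A -> Prop) : Prop :=
  additive_subgroup I /\ (forall x r : A, I x -> I (x * r)).

Definition left_ideal (A : nzRingType) (I : A -> Prop) : Prop :=
  additive_subgroup I /\ (forall x r : A, I x -> I (r * x)).

Definition two_sided_ideal (A : nzRingType) (I : A -> Prop) : Prop :=
  right_ideal I /\ left_ideal I.

Definition maximal_right_ideal (A : nzRingType) (I : A -> Prop) : Prop :=
  [/\ right_ideal I, (exists x, ~ I x) &
      forall J : A -> Prop, right_ideal J -> (forall x, I x -> J x) ->
        (forall x, J x -> I x) \/ (forall x, J x)].

(* Main.v *)
Require Import Defs.
From HB Require Import structures.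
From mathcomp Require Import all_boot all_order all_algebra ring zify.
From Stdlib Require Import Classical.
Set Implicit Arguments. Unset Strict Implicit. Unset Printing Implicit Defensive.
Import GRing.Theory.
Local Open Scope ring_scope.

Notation F := 'F_2.
Implicit Types p q r : {poly F}.
Definition act p q : {poly F} := \sum_(i < size p) p`_i *: drop_poly i q.

Lemma actE n p q : (size p <= n)%N -> act p q = \sum_(i < n) p`_i *: drop_poly i q.
Proof.
move=> hn; rewrite /act (big_ord_widen n (fun i => p`_i *: drop_poly i q)) //.
rewrite big_mkcond; apply: eq_bigr => i _; case: ifP => // /negbT.
by rewrite -leqNgt => h; rewrite nth_default // scale0r.
Qed.

Lemma drop_drop a b q : drop_poly a (drop_poly b q) = drop_poly (a + b) q.
Proof. by apply/polyP => i; rewrite !coef_drop_poly addnA. Qed.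

Lemma act0l q : act 0 q = 0.
Proof. by rewrite /act size_poly0 big_ord0. Qed.

Lemma act0r p : act p 0 = 0.
Proof. by rewrite /act big1 // => i _; rewrite drop_poly0r scaler0. Qed.

Lemma actDl (p1 p2 : {poly F}) q : act (p1 + p2) q = act p1 q + act p2 q.
Proof.
set n := maxn (size p1) (size p2).
rewrite (actE q (size_polyD _ _)) (@actE n p1) ?leq_maxl //.
rewrite (@actE n p2) ?leq_maxr // -big_split /=.
by apply: eq_bigr => i _; rewrite coefD scalerDl.
Qed.

Lemma actDr p (q1 q2 : {poly F}) : act p (q1 + q2) = act p q1 + act p q2.
Proof. by rewrite /act -big_split; apply: eq_bigr => i _; rewrite drop_polyD scalerDr. Qed.

Lemma actNr p q : act p (- q) = - act p q.
Proof. by apply/eqP; rewrite -subr_eq0 opprK -actDr addNr act0r. Qed.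

Lemma act1 q : act 1 q = q.
Proof. by rewrite /act size_poly1 big_ord1 coefC /= scale1r drop_poly0l. Qed.

Lemma actC c r q : act (c%:P * r) q = c *: act r q.
Proof.
rewrite mul_polyC (@actE (size r)) ?size_scale_leq //.
rewrite /act scaler_sumr; apply: eq_bigr => i _; by rewrite coefZ scalerA.
Qed.

Lemma drop_act p q : drop_poly 1 (act p q) = act p (drop_poly 1 q).
Proof.
rewrite /act drop_poly_sum; apply: eq_bigr => i _.
by rewrite drop_polyZ !drop_drop addnC.
Qed.

Lemma actX r q : act (r * 'X) q = act r (drop_poly 1 q).
Proof.
rewrite (@actE (size r).+1); last first.
  by rewrite (leq_trans (size_polyMleq _ _)) // size_polyX addn2.
rewrite big_ord_recl coefMX eqxx scale0r add0r /act; apply: eq_bigr => i _.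
by rewrite coefMX /= drop_drop addn1.
Qed.

Lemma actM (p1 p2 : {poly F}) q : act (p1 * p2) q = act p1 (act p2 q).
Proof.
elim/poly_ind: p1 q => [|p c IH] q; first by rewrite mul0r !act0l.
rewrite mulrDl actDl -mulrA (mulrC 'X) mulrA actX IH actC actDl actX drop_act.
by rewrite -[c%:P]mulr1 actC act1.
Qed.


Definition T := ({poly F} * {poly F})%type.
HB.instance Definition _ := GRing.Zmodule.on T.

Definition tmul (x y : T) : T := (x.1 * y.1, act x.1 y.2 + act y.1 x.2).
Definition tone : T := (1, 0).

Fact tmulA : associative tmul.
Proof.
move=> [p q] [p' q'] [p'' q'']; rewrite /tmul /=; congr pair; first by rewrite mulrA.
have aC a b c : act a (act b c) = act b (act a c) by rewrite -!actM mulrC.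
rewrite !actDr !actM (aC p'' p) (aC p'' p') addrA; congr (_ + _).
Qed.

Fact tmulC : commutative tmul.
Proof. by move=> [p q] [p' q']; rewrite /tmul /= mulrC addrC. Qed.

Fact tmul1 : left_id tone tmul.
Proof. by move=> [p q]; rewrite /tmul /= mul1r act1 act0r addr0. Qed.

Fact tmulDl : left_distributive tmul +%R.
Proof.
move=> [p1 q1] [p2 q2] [p q]; rewrite /tmul /=; congr pair; first by rewrite mulrDl.
rewrite actDl actDr; rewrite -!addrA; congr (_ + _).
by rewrite addrC -addrA; congr (_ + _); rewrite addrC.
Qed.

Fact tone_neq0 : tone != 0.
Proof. by rewrite /tone xpair_eqE oner_eq0. Qed.

HB.instance Definition _ := GRing.Zmodule_isComNzRing.Build T tmulA tmulC tmul1 tmulDl tone_neq0.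

Lemma tmulE (x y : T) : x * y = (x.1 * y.1, act x.1 y.2 + act y.1 x.2).
Proof. by []. Qed.
Lemma toneE : (1 : T) = (1, 0). Proof. by []. Qed.


Definition s : T := ('X, 0).
Definition A := ((T * T) * (T * T))%type.
HB.instance Definition _ := GRing.Zmodule.on A.

Definition amul (a c : A) : A :=
  let: ((a0, a1), (a2, a3)) := a in
  let: ((c0, c1), (c2, c3)) := c in
  ((a0*c0 - a1*c1 + (a2*(c2 - s*c3) + a3*c3),
    a0*c1 + a1*c0 - s*a1*c1 + (- a2*c3 + a3*(c2 - s*c3) + s*a3*c3)),
   (a0*c2 - a1*c3 + (a2*(c0 - s*c1) + a3*c1),
    a0*c3 + a1*c2 - s*a1*c3 + (- a2*c1 + a3*(c0 - s*c1) + s*a3*c1))).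
Definition aone : A := ((1, 0), (0, 0)).

Lemma addA4 (a0 a1 a2 a3 b0 b1 b2 b3 : T) :
  (((a0, a1), (a2, a3)) + ((b0, b1), (b2, b3)) : A) = ((a0+b0, a1+b1), (a2+b2, a3+b3)).
Proof. by []. Qed.

Fact amulA : associative amul.
Proof.
move=> [[a0 a1] [a2 a3]] [[b0 b1] [b2 b3]] [[c0 c1] [c2 c3]] /=.
congr ((_, _), (_, _)); ring.
Qed.
Fact amul1 : left_id aone amul.
Proof. move=> [[a0 a1] [a2 a3]] /=; congr ((_, _), (_, _)); ring. Qed.
Fact amulr1 : right_id aone amul.
Proof. move=> [[a0 a1] [a2 a3]] /=; congr ((_, _), (_, _)); ring. Qed.
Fact amulDl : left_distributive amul +%R.
Proof.
move=> [[a0 a1] [a2 a3]] [[b0 b1] [b2 b3]] [[c0 c1] [c2 c3]].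
rewrite !addA4 /=; congr ((_, _), (_, _)); ring.
Qed.
Fact amulDr : right_distributive amul +%R.
Proof.
move=> [[a0 a1] [a2 a3]] [[b0 b1] [b2 b3]] [[c0 c1] [c2 c3]].
rewrite !addA4 /=; congr ((_, _), (_, _)); ring.
Qed.
Fact aone_neq0 : aone != 0.
Proof. by rewrite /aone !xpair_eqE oner_eq0. Qed.

HB.instance Definition _ := GRing.Zmodule_isNzRing.Build A amulA amul1 amulr1 amulDl amulDr aone_neq0.

Lemma h1 : (1 + 1 : F) = 0.
Proof. by apply/val_inj. Qed.
Lemma h2 : (1 + 1 : F) = 0.
Proof. by apply/eqP. Qed.
Lemma two0 : (2 : T) = 0.
Proof.
rewrite mulr2n toneE.
change (((1 + 1 : {poly F}), (0 + 0 : {poly F})) = (0,0)).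
by rewrite addr0 -polyCD h1.
Qed.


Definition mkA (a0 a1 a2 a3 : T) : A := ((a0, a1), (a2, a3)).

Lemma zero_by (x e : T) : x - e = 0 -> e = 0 -> x = 0.
Proof. by move=> h he; move/eqP: h; rewrite he subr0 => /eqP. Qed.

Definition centralA (a : A) := forall y : A, a * y = y * a.

Lemma central_crit (a0 a1 a2 a3 : T) :
  s*a1 = 0 -> s*a2 = 0 -> s*a3 = 0 -> centralA (mkA a0 a1 a2 a3).
Proof.
move=> h1 h2 h3 [[c0 c1] [c2 c3]].
change (amul (mkA a0 a1 a2 a3) (mkA c0 c1 c2 c3) = amul (mkA c0 c1 c2 c3) (mkA a0 a1 a2 a3)).
rewrite /amul /mkA; congr ((_, _), (_, _)); apply/eqP; rewrite -subr_eq0; apply/eqP.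
- apply: (zero_by (e := (s*a3)*c2 - (s*a2)*c3)); first ring.
  by rewrite h2 h3 !mul0r subr0.
- apply: (zero_by (e := 2*(a3*c2 - a2*c3))); first ring.
  by rewrite two0 mul0r.
- apply: (zero_by (e := 2*(a3*c1 - a1*c3) - (s*a2)*c1 + (s*a1)*c2)); first ring.
  by rewrite two0 h1 h2 !mul0r subr0 addr0.
- apply: (zero_by (e := 2*(a1*c2 - a2*c1) - (s*a1)*c3 + (s*a3)*c1)); first ring.
  by rewrite two0 h1 h3 !mul0r subr0 addr0.
Qed.


Lemma act_coef (p q : {poly F}) j : (act p q)`_j = \sum_(i < size p) p`_i * q`_(j + i).
Proof. by rewrite /act coef_sum; apply: eq_bigr => i _; rewrite coefZ coef_drop_poly. Qed.

Lemma actXn_coef (p : {poly F}) m j :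
  (act p 'X^m)`_j = if (j <= m)%N then p`_(m - j) else 0.
Proof.
rewrite act_coef; case: leqP => hj.
  case: (ltnP (m - j) (size p)) => hs.
    rewrite (bigD1 (Ordinal hs)) //= coefXn subnKC // eqxx mulr1 big1 ?addr0 //.
    move=> i /eqP hi; rewrite coefXn; case: eqP => [e|_]; last by rewrite mulr0.
    by case: hi; apply: val_inj => /=; rewrite -e addKn.
  rewrite nth_default // big1 // => i _; rewrite coefXn; case: eqP => [e|_]; last by rewrite mulr0.
  have ei : (i : nat) = (m - j)%N by rewrite -e addKn.
  by move: (ltn_ord i); rewrite ltnNge ei hs.
rewrite big1 // => i _; rewrite coefXn; case: eqP => [e|_]; last by rewrite mulr0.
by move: hj; rewrite -e ltnNge leq_addr.
Qed.

Lemma actXnl n (q : {poly F}) : act ('X^n) q = drop_poly n q.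
Proof.
rewrite /act size_polyXn big_ord_recr /= big1 ?add0r; first by rewrite coefXn eqxx scale1r.
by move=> i _; rewrite coefXn ltn_eqF // scale0r.
Qed.

Lemma sE (p q : {poly F}) : s * (p, q) = ('X * p, act 'X q).
Proof. by rewrite tmulE /= act0r addr0. Qed.

Lemma max3 (x y z : nat) : exists2 m, [&& (x <= m)%N, (y <= m)%N & (z <= m)%N] & [|| x == m, y == m | z == m].
Proof.
exists (maxn x (maxn y z)); first by rewrite leq_maxl (leq_trans (leq_maxl y z) (leq_maxr _ _)) (leq_trans (leq_maxr y z) (leq_maxr _ _)).
case: (leqP x (maxn y z)) => h1; last by rewrite eqxx.
by case: (leqP y z) => h2; rewrite eqxx ?orbT.
Qed.

Lemma PT (a1 a2 a3 : T) : ~ (s*a1 = 0 /\ s*a2 = 0 /\ s*a3 = 0) ->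
  exists t : T, [/\ s*(a1*t) = 0, s*(a2*t) = 0, s*(a3*t) = 0 & ~ (a1*t = 0 /\ a2*t = 0 /\ a3*t = 0)].
Proof.
case: a1 a2 a3 => [p1 q1] [p2 q2] [p3 q3] h.
case: (boolP [|| p1 != 0, p2 != 0 | p3 != 0]) => hp.
  have ex : exists i, [|| p1`_i != 0, p2`_i != 0 | p3`_i != 0].
    case/or3P: hp => hp; [exists (size p1).-1 | exists (size p2).-1 | exists (size p3).-1];
    by rewrite -lead_coefE lead_coef_eq0 hp ?orbT.
  case: (ex_minnP ex) => v hv hmin.
  have low i : (i < v)%N -> [/\ p1`_i = 0, p2`_i = 0 & p3`_i = 0].
    move=> hi; case Pi: [|| p1`_i != 0, p2`_i != 0 | p3`_i != 0].
      by have := hmin _ Pi; rewrite leqNgt hi.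
    by move/negbT: Pi; rewrite !negb_or !negbK => /and3P[/eqP -> /eqP -> /eqP ->].
  have key (p q : {poly F}) : (forall i, (i < v)%N -> p`_i = 0) ->
      ((p, q) : T) * (0, 'X^v) = (0, act p 'X^v) /\ s * (((p, q) : T) * (0, 'X^v)) = 0.
    move=> hl; have e : ((p, q) : T) * (0, 'X^v) = (0, act p 'X^v) by rewrite tmulE /= mulr0 act0l addr0.
    split=> //; rewrite e sE mulr0 -actM; congr pair; apply/polyP => j.
    rewrite actXn_coef coef0 coefXM; case: leqP => // hj; case: eqP => // hvj.
    by apply: hl; lia.
  have [e1 f1] : _ := key p1 q1 (fun i hi => let: And3 x _ _ := low i hi in x).
  have [e2 f2] : _ := key p2 q2 (fun i hi => let: And3 _ x _ := low i hi in x).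
  have [e3 f3] : _ := key p3 q3 (fun i hi => let: And3 _ _ x := low i hi in x).
  exists (0, 'X^v); split=> //; rewrite e1 e2 e3 => -[z1 [z2 z3]].
  have c0 (p : {poly F}) : (0, act p 'X^v) = 0 :> T -> p`_v = 0.
    move=> /(congr1 snd) /(congr1 (fun r : {poly F} => r`_0)) /=.
    by rewrite actXn_coef subn0 coef0.
  by case/or3P: hv => /eqP; [apply; apply: c0 z1 | apply; apply: c0 z2 | apply; apply: c0 z3].
move: hp; rewrite !negb_or !negbK => /and3P[/eqP e1 /eqP e2 /eqP e3]; subst.
have [m /and3P[m1 m2 m3] hm] := max3 (size q1) (size q2) (size q3).
have eA (q : {poly F}) n : ((0, q) : T) * ('X^n, 0) = (0, drop_poly n q) :> T.
  by rewrite tmulE /= mul0r act0l add0r actXnl.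
have eB (q : {poly F}) n : s * (0, drop_poly n q) = (0, drop_poly n.+1 q) :> T.
  by rewrite sE mulr0 -[X in act X _]expr1 actXnl drop_drop add1n.
case: m m1 m2 m3 hm => [|N] m1 m2 m3 hm.
  case: h; rewrite !size_poly_leq0 in m1 m2 m3.
  by rewrite (eqP m1) (eqP m2) (eqP m3) !sE !mulr0 !act0r.
exists ('X^N, 0); rewrite !eA !eB (drop_poly_eq0 m1) (drop_poly_eq0 m2) (drop_poly_eq0 m3).
split=> // -[z1 [z2 z3]].
have c0 (q : {poly F}) : size q = N.+1 -> (0, drop_poly N q) = 0 :> T -> False.
  move=> hs /(congr1 snd) /(congr1 (fun r : {poly F} => r`_0)) /=.
  rewrite coef_drop_poly coef0 add0n => /eqP.
  have -> : N = (size q).-1 by rewrite hs.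
  by rewrite -lead_coefE lead_coef_eq0 -size_poly_eq0 hs.
by case/or3P: hm => /eqP hs; [apply: c0 z1 | apply: c0 z2 | apply: c0 z3].
Qed.


Lemma F2fact (u v : F) : ~ (u = 0 /\ v = 0) -> u*u - u*v + v*v = 1.
Proof.
move=> h; have: [forall u : F, forall v : F, ((u != 0) || (v != 0)) ==> (u*u - u*v + v*v == 1)].
  apply/forallP; case=> [[|[|//]]] i; apply/forallP; case=> [[|[|//]]] j; by [].
move=> /forallP /(_ u) /forallP /(_ v) /implyP; apply: (fun H => eqP (H _)).
case: (eqVneq u 0) => [hu|//]; case: (eqVneq v 0) => [hv|//].
by case: h.
Qed.


Definition nu (x : T) : F := x.1.[1].
Lemma nuD x y : nu (x + y) = nu x + nu y. Proof. by rewrite /nu /= hornerD. Qed.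
Lemma nuN x : nu (- x) = - nu x. Proof. by rewrite /nu /= hornerN. Qed.
Lemma nuM x y : nu (x * y) = nu x * nu y. Proof. by rewrite /nu tmulE /= hornerM. Qed.
Lemma nu0 : nu 0 = 0. Proof. by rewrite /nu /= horner0. Qed.
Lemma nu1 : nu 1 = 1. Proof. by rewrite /nu toneE /= hornerC. Qed.
Lemma nus : nu s = 1. Proof. by rewrite /nu /= hornerX. Qed.

Definition Mset (a : A) : Prop := nu a.2.1 = nu a.1.1 - nu a.1.2 /\ nu a.2.2 = - nu a.1.2.

Lemma subA4 (a0 a1 a2 a3 b0 b1 b2 b3 : T) :
  mkA a0 a1 a2 a3 - mkA b0 b1 b2 b3 = mkA (a0 - b0) (a1 - b1) (a2 - b2) (a3 - b3).
Proof. by []. Qed.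
Lemma addA4' (a0 a1 a2 a3 b0 b1 b2 b3 : T) :
  mkA a0 a1 a2 a3 + mkA b0 b1 b2 b3 = mkA (a0 + b0) (a1 + b1) (a2 + b2) (a3 + b3).
Proof. by []. Qed.
Lemma mulA4 (a0 a1 a2 a3 c0 c1 c2 c3 : T) :
  mkA a0 a1 a2 a3 * mkA c0 c1 c2 c3 = amul (mkA a0 a1 a2 a3) (mkA c0 c1 c2 c3).
Proof. by []. Qed.
Lemma oneA : (1 : A) = mkA 1 0 0 0. Proof. by []. Qed.
Lemma zeroA : (0 : A) = mkA 0 0 0 0. Proof. by []. Qed.

Lemma M_right (x r : A) : Mset x -> Mset (x * r).
Proof.
case: x r => [[a0 a1] [a2 a3]] [[c0 c1] [c2 c3]] [/= h2 h3].
rewrite (mulA4 a0) /amul /mkA /Mset /= !(nuD, nuN, nuM) nus h2 h3; split; ring.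
Qed.

Lemma M_sub (x y : A) : Mset x -> Mset y -> Mset (x - y).
Proof.
case: x y => [[a0 a1] [a2 a3]] [[c0 c1] [c2 c3]] [/= h2 h3] [/= h2' h3'].
rewrite (subA4 a0) /Mset /= !(nuD, nuN) h2 h3 h2' h3'; split; ring.
Qed.

Lemma M0 : Mset 0. Proof. by rewrite /Mset /= nu0 subr0 oppr0. Qed.

Lemma Mg (n : T) : nu n = 1 -> Mset (mkA 1 0 0 0 - mkA n 0 0 0).
Proof. by move=> hn; rewrite subA4 /Mset /= !(nuD, nuN) hn nu0 nu1; split; ring. Qed.

Theorem theorem1p4 :
  exists (A : nzRingType) (I : A -> Prop),
    [/\ centrally_essential A, maximal_right_ideal I & ~ two_sided_ideal I].
Proof.
exists A, Mset; split.
- right; case=> [[a0 a1] [a2 a3]] nc.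
  have h : ~ (s*a1 = 0 /\ s*a2 = 0 /\ s*a3 = 0).
    by move=> [h1 [h2 h3]]; apply: nc; exact: central_crit.
  have [t [t1 t2 t3 tn]] := PT h.
  exists (mkA t 0 0 0), (mkA (a0*t) (a1*t) (a2*t) (a3*t)); split.
  + by apply: central_crit; rewrite mulr0.
  + exact: central_crit.
  + apply/eqP => /(congr1 (fun a : A => a.1.1)) /= t0; apply: tn.
    by rewrite t0 !mulr0.
  + apply/eqP => e; apply: tn; rewrite zeroA /mkA in e; split; [|split];
      [move: (congr1 (fun a : A => a.1.2) e) | move: (congr1 (fun a : A => a.2.1) e)
      | move: (congr1 (fun a : A => a.2.2) e)]; by [].
  + rewrite (mulA4 a0) /amul /mkA; congr ((_, _), (_, _)); ring.
- split.
  + split; first by split; [exact: M0 | exact: M_sub].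
    exact: M_right.
  + exists 1; rewrite oneA /Mset /= nu0 nu1 subr0 => -[/eqP].
    by rewrite eq_sym oner_eq0.
  + move=> J [[J0 JB] JR] MJ.
    case: (classic (exists a, J a /\ ~ Mset a)) => [[a [Ja nMa]]|hno]; last first.
      left => x Jx; case: (classic (Mset x)) => // nM; case: hno; by exists x.
    right.
    have JD x y : J x -> J y -> J (x + y).
      move=> Jx Jy; have := JB x (0 - y) Jx (JB 0 y J0 Jy).
      by rewrite sub0r opprK.
    case: a Ja nMa => [[a0 a1] [a2 a3]] Ja nMa.
    pose d0 := a2 - (a0 - s*a1); pose d1 := a3 + a1.
    have Jm : J (mkA a0 a1 (a0 - s*a1) (-a1)).
      by apply: MJ; rewrite /Mset /= !(nuD, nuN, nuM) nus mul1r.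
    have Jf := JR _ (mkA (d0 - s*d1) (-d1) 0 0) (JR _ (mkA 0 0 1 0) (JB _ _ Ja Jm)).
    pose N := d0*d0 - s*d0*d1 + d1*d1.
    have ef : (mkA a0 a1 a2 a3 - mkA a0 a1 (a0 - s * a1) (- a1)) * mkA 0 0 1 0 *
       mkA (d0 - s * d1) (- d1) 0 0 = mkA N 0 0 0.
      rewrite subA4 !mulA4 /amul /mkA /N /d0 /d1; congr ((_, _), (_, _)); ring.
    rewrite ef in Jf.
    have key (e0 e1 : T) : ~ (nu e0 = 0 /\ nu e1 = 0) -> nu (e0*e0 - s*e0*e1 + e1*e1) = 1.
      by move=> /F2fact <-; rewrite !(nuD, nuN, nuM) nus; ring.
    have nN : nu N = 1.
      apply: key => -[u0 v0]; apply: nMa.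
      move: u0 v0; rewrite /d0 /d1 /Mset /= !(nuD, nuN, nuM) nus mul1r.
      move=> /eqP; rewrite subr_eq0 => /eqP ->; move=> /eqP; rewrite addr_eq0 => /eqP ->.
      by [].
    have Jg : J (mkA 1 0 0 0 - mkA N 0 0 0).
      by apply: MJ; apply: Mg.
    have J1 : J 1 by rewrite oneA -(subrK (mkA N 0 0 0) (mkA 1 0 0 0)); apply: JD.
    by move=> x; rewrite -(mul1r x); apply: JR.
- move=> [_ [_ HL]].
  have Mx : Mset (mkA 1 0 1 0) by rewrite /Mset /= nu0 nu1 subr0 oppr0.
  have := HL _ (mkA 0 1 0 0) Mx; rewrite mulA4 /amul /mkA /Mset /=.
  rewrite !(nuD, nuN, nuM) nus nu0 nu1 => -[h _]; move: h.
  by move/eqP.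
Qed.
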